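(* Let $(X,\|\cdot\|)$ be an extended Banach space and let $\tau_F$ be its finest locally convex topology. Then $(X,\tau_F)$ is a Mackey space, i.e. $\tau_F$ coincides with the Mackey topology of $(X,\tau_F)$.
   Context: An extended norm on a vector space $X$ over $\mathbb{R}$ or $\mathbb{C}$ is a map $\|\cdot\|:X\to[0,\infty]$ with $\|x\|=0$ iff $x=0_X$, $\|\alpha x\|=|\alpha|\|x\|$, and $\|x+y\|\le\|x\|+\|y\|$; $X$ carries the topology with basic neighborhoods $\{y:\|y-x\|<\varepsilon\}$. $(X,\|\cdot\|)$ is an extended Banach space if every Cauchy sequence converges. A locally convex topology on $X$ is one induced by a family of finite-valued seminorms. The finest locally convex topology $\tau_F$ is the locally convex topology coarser than the extended norm topology such that every locally convex topology coarser than the extended norm topology is coarser than $\tau_F$. The Mackey topology of a locally convex space $(X,\sigma)$ is the topology of uniform convergence on absolutely convex weak$^*$-compact subsets of $(X,\sigma)^*$; it is the finest locally convex topology on $X$ having the same continuous linear functionals as $\sigma$. *)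

(* Defs.v *)
From HB Require Import structures.
From mathcomp Require Import all_boot all_order all_algebra.
From mathcomp Require Import boolp classical_sets cardinality reals constructive_ereal.
From mathcomp Require Import complex.

Set Implicit Arguments.
Unset Strict Implicit.
Unset Printing Implicit Defensive.

Import Order.TTheory GRing.Theory Num.Theory.
Local Open Scope classical_set_scope.
Local Open Scope ring_scope.

(* Scalars: a ring K with an absolute value absK : K -> R (R a realType).
   Instantiated below with (K, absK) = (R, normr) and (R[i], normc). *)

Section Defs.
Variables (R : realType) (K : pzRingType) (absK : K -> R) (X : lmodType K).

Definition is_ext_norm (N : X -> \bar R) : Prop :=
  [/\ forall x, (0 <= N x)%E,
      forall x, N x = 0%E <-> x = 0,
      forall (a : K) x, N (a *: x)%R = ((absK a)%:E * N x)%E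
    & forall x y, (N (x + y)%R <= N x + N y)%E].

Definition ext_cauchy (N : X -> \bar R) (u : nat -> X) : Prop :=
  forall eps : R, 0 < eps -> exists M : nat,
    forall m n, (M <= m)%N -> (M <= n)%N -> (N (u m - u n)%R < eps%:E)%E.

Definition ext_converges (N : X -> \bar R) (u : nat -> X) (x : X) : Prop :=
  forall eps : R, 0 < eps -> exists M : nat,
    forall n, (M <= n)%N -> (N (u n - x)%R < eps%:E)%E.

Definition is_ext_banach (N : X -> \bar R) : Prop :=
  is_ext_norm N /\
  forall u, ext_cauchy N u -> exists x, ext_converges N u x.

Definition ext_norm_open (N : X -> \bar R) : set (set X) :=
  [set U | forall x, U x -> exists2 eps : R, 0 < eps &
     [set y | (N (y - x)%R < eps%:E)%E] `<=` U].

Definition is_seminorm (p : X -> R) : Prop :=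
  [/\ forall x, 0 <= p x,
      forall (a : K) x, p (a *: x) = absK a * p x
    & forall x y, p (x + y) <= p x + p y].

Definition lc_open (P : set (X -> R)) : set (set X) :=
  [set U | forall x, U x -> exists F : set (X -> R),
     [/\ finite_set F, F `<=` P &
       exists2 eps : R, 0 < eps &
         [set y | forall p, F p -> p (y - x) < eps] `<=` U]].

Definition seminorm_family (P : set (X -> R)) : Prop :=
  forall p, P p -> is_seminorm p.

Definition nbhd_of (O : set (set X)) (x : X) (V : set X) : Prop :=
  exists U, [/\ O U, U x & U `<=` V].

Definition is_linear_functional (f : X -> K) : Prop :=
  forall (a : K) x y, f (a *: x + y) = a * f x + f y.

Definition cont_functional (O : set (set X)) (f : X -> K) : Prop :=
  forall x (eps : R), 0 < eps ->
    nbhd_of O x [set y | absK (f y - f x) < eps].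

Definition dual (O : set (set X)) : set (X -> K) :=
  [set f | is_linear_functional f /\ cont_functional O f].

Definition weak_star_open : set (set (X -> K)) :=
  [set U | forall f, U f -> exists F : set X,
     finite_set F /\ exists2 eps : R, 0 < eps &
       [set g | forall x, F x -> absK (g x - f x) < eps] `<=` U].

Definition compact_in (T : Type) (O : set (set T)) (A : set T) : Prop :=
  forall C : set (set T), C `<=` O -> A `<=` \bigcup_(V in C) V ->
    exists C' : set (set T),
      [/\ finite_set C', C' `<=` C & A `<=` \bigcup_(V in C') V].

Definition absolutely_convex (A : set (X -> K)) : Prop :=
  forall f g (a b : K), A f -> A g -> absK a + absK b <= 1 ->
    A (fun x => a * f x + b * g x).

(* Sets on which the Mackey topology of (X, O) is uniform convergence. *)
Definition mackey_sets (O : set (set X)) : set (set (X -> K)) :=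
  [set A | [/\ A `<=` dual O, absolutely_convex A & compact_in weak_star_open A]].

Definition unif_seminorm (A : set (X -> K)) (x : X) : R :=
  sup [set absK (f x) | f in A].

Definition mackey_open (O : set (set X)) : set (set X) :=
  lc_open [set p | exists2 A, mackey_sets O A & p = unif_seminorm A].

(* The finest locally convex topology coarser than the extended norm topology,
   given as the topology induced by a family P of seminorms. *)
Definition is_finest_lc (N : X -> \bar R) (P : set (X -> R)) : Prop :=
  [/\ seminorm_family P,
      lc_open P `<=` ext_norm_open N &
      forall Q, seminorm_family Q -> lc_open Q `<=` ext_norm_open N ->
        lc_open Q `<=` lc_open P].

End Defs.

Definition normC (R : realType) (z : complex.complex R) : R := @ComplexField.Normc.normc R z.

(* Main.v *)
Require Import Defs.
From HB Require Import structures.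
From mathcomp Require Import all_boot all_order all_algebra.
From mathcomp Require Import boolp classical_sets cardinality reals constructive_ereal.
From mathcomp Require Import complex.
From mathcomp Require Import finmap fsbigop.
From mathcomp Require Import ring lra.
From mathcomp Require Import topology normedtype.
Import Order.TTheory GRing.Theory Num.Theory.
Import numFieldNormedType.Exports.
Set Implicit Arguments.
Unset Strict Implicit.
Unset Printing Implicit Defensive.
Local Open Scope ring_scope.
Local Open Scope classical_set_scope.

Section Fin.
Variables (R : realType) (T : choiceType).

Lemma finite_common_radius (F : set T) (Pr : T -> R -> Prop) :
  finite_set F ->
  (forall t d d', 0 < d' -> d' <= d -> Pr t d -> Pr t d') ->
  (forall t, F t -> exists2 d, 0 < d & Pr t d) ->
  exists2 d, 0 < d & forall t, F t -> Pr t d.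
Proof.
move=> finF mono H.
suff [d d0 Hd] : exists2 d, 0 < d & forall t, t \in (fset_set F : seq T) -> F t -> Pr t d.
  exists d => // t Ft; apply: Hd => //.
  by have := in_fset_set finF t; rewrite /= => ->; rewrite in_setE.
elim: (fset_set F : seq T) => [|a s [d1 d10 H1]]; first by exists 1.
have [Fa|nFa] := pselect (F a); last first.
  exists d1 => // t; rewrite inE => /orP[/eqP->//|ts Ft]; exact: H1.
have [d2 d20 H2] := H a Fa.
exists (Num.min d1 d2); first by rewrite lt_min d10 d20.
move=> t; rewrite inE => /orP[/eqP->|ts Ft] => [_|].
  by apply: mono H2; [rewrite lt_min d10 d20| rewrite ge_min lexx orbT].
by apply: (mono _ d1); [rewrite lt_min d10 d20| rewrite ge_min lexx| exact: H1].
Qed.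

Lemma finite_common_bound (F : set T) (Pr : T -> R -> Prop) :
  finite_set F ->
  (forall t d d', d <= d' -> Pr t d -> Pr t d') ->
  (forall t, F t -> exists d, Pr t d) ->
  exists d, forall t, F t -> Pr t d.
Proof.
move=> finF mono H.
suff [d Hd] : exists d, forall t, t \in (fset_set F : seq T) -> F t -> Pr t d.
  exists d => // t Ft; apply: Hd => //.
  by have := in_fset_set finF t; rewrite /= => ->; rewrite in_setE.
elim: (fset_set F : seq T) => [|a s [d1 H1]]; first by exists 0.
have [Fa|nFa] := pselect (F a); last first.
  exists d1 => // t; rewrite inE => /orP[/eqP->//|ts Ft]; exact: H1.
have [d2 H2] := H a Fa.
exists (Num.max d1 d2).
move=> t; rewrite inE => /orP[/eqP->|ts Ft] => [_|].
  by apply: mono H2; rewrite le_max lexx orbT.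
by apply: (mono _ d1); [rewrite le_max lexx| exact: H1].
Qed.

End Fin.

Section Sup.
Variable R : realType.

Lemma sup_scale (T : Type) (A : set T) (g : T -> R) (c : R) :
  0 <= c -> (exists M, forall t, A t -> g t <= M) ->
  sup [set c * g t | t in A] = c * sup [set g t | t in A].
Proof.
move=> c0 [M HM].
have ubg : has_ubound [set g t | t in A] by exists M => _ [t At <-]; exact: HM.
have ubcg : has_ubound [set c * g t | t in A].
  by exists (c * M) => _ [t At <-]; rewrite ler_wpM2l // HM.
have [[t0 At0]|nA] := pselect (exists t, A t); last first.
  have -> : A = set0 by apply/seteqP; split => t // At; apply: nA; exists t.
  by rewrite !image_set0 sup0 mulr0.
apply/eqP; rewrite eq_le; apply/andP; split.
  apply: ge_sup; first by exists (c * g t0), t0.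
  by move=> _ [t At <-]; rewrite ler_wpM2l //; apply: ub_le_sup => //; exists t.
have [c00|cpos] := eqVneq c 0.
  have -> : c * sup [set g t | t in A] = 0 by rewrite c00 mul0r.
  have h : [set c * g t | t in A] (c * g t0) by exists t0.
  by apply: le_trans (ub_le_sup ubcg h); rewrite c00 mul0r.
have cp : 0 < c by rewrite lt_neqAle eq_sym cpos c0.
rewrite -ler_pdivlMl //; apply: ge_sup; first by exists (g t0), t0.
move=> _ [t At <-]; rewrite ler_pdivlMl //; apply: ub_le_sup => //; by exists t.
Qed.

End Sup.

Lemma ltr02 {R : numDomainType} : (0 : R) < 2.
Proof. by rewrite ltr0n. Qed.

Section Misc.
Variable R : realType.

Lemma exists_nat_gt (x : R) : exists k : nat, x < k%:R.
Proof.
exists (Num.Def.archi_bound `|x|); apply: le_lt_trans (archi_boundP (normr_ge0 x)).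
exact: ler_norm.
Qed.

Lemma sup_le_of (S : set R) b : 0 <= b -> (forall s, S s -> s <= b) -> sup S <= b.
Proof.
move=> b0 Hb; have [[s Ss]|nS] := pselect (exists s, S s).
  by apply: ge_sup => //; exists s.
have -> : S = set0 by apply/seteqP; split => t // St; apply: nS; exists t.
by rewrite sup0.
Qed.

Lemma sup_ge0 (S : set R) : has_ubound S -> (forall s, S s -> 0 <= s) -> 0 <= sup S.
Proof.
move=> ub H; have [[s Ss]|nS] := pselect (exists s, S s).
  by apply: le_trans (H s Ss) (ub_le_sup ub Ss).
have -> : S = set0 by apply/seteqP; split => t // St; apply: nS; exists t.
by rewrite sup0.
Qed.

End Misc.

Section Generic.
Variables (R : realType) (K : fieldType) (absK : K -> R).
Hypotheses (absK_ge0 : forall a, 0 <= absK a) (absK0 : absK 0 = 0) (absK1 : absK 1 = 1)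
  (absKM : forall a b, absK (a * b) = absK a * absK b)
  (absKD : forall a b, absK (a + b) <= absK a + absK b)
  (absK_surj : forall r : R, 0 <= r -> exists c : K, absK c = r).

Lemma absKN1 : absK (-1) = 1.
Proof.
have := absKM (-1) (-1); rewrite mulrNN mulr1 absK1 => /esym/eqP.
rewrite -expr2 sqrf_eq1 => /orP[/eqP//|/eqP h].
by have := absK_ge0 (-1); rewrite h ler0N1.
Qed.

Lemma absKN a : absK (- a) = absK a.
Proof. by rewrite -mulN1r absKM absKN1 mul1r. Qed.

Lemma absKB a b : absK (a - b) = absK (b - a).
Proof. by rewrite -absKN opprB. Qed.

Lemma absK_lb a b : absK a - absK b <= absK (a - b).
Proof. by rewrite lerBlDr; apply: le_trans (absKD _ _); rewrite subrK. Qed.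

Lemma absKV a : a != 0 -> absK (a^-1) = (absK a)^-1.
Proof.
move=> a0; have h : absK (a^-1) * absK a = 1 by rewrite -absKM mulVf // absK1.
have ha : absK a != 0.
  by apply/eqP => ha; move: h; rewrite ha mulr0 => /eqP; rewrite eq_sym oner_eq0.
by apply: (mulIf ha); rewrite h mulVf.
Qed.

Section LF.
Variable X : lmodType K.
Implicit Types f : X -> K.

Lemma lf0 f : is_linear_functional f -> f 0 = 0.
Proof.
move=> lf; have := lf 1 0 0; rewrite scaler0 addr0 mul1r.
by move/(congr1 (fun z => z - f 0)); rewrite subrr addrK => ->.
Qed.

Lemma lfD f x y : is_linear_functional f -> f (x + y) = f x + f y.
Proof. by move=> lf; have := lf 1 x y; rewrite scale1r mul1r. Qed.

Lemma lfZ f a x : is_linear_functional f -> f (a *: x) = a * f x.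
Proof. by move=> lf; have := lf a x 0; rewrite addr0 (lf0 lf) addr0. Qed.

Lemma lfN f x : is_linear_functional f -> f (- x) = - f x.
Proof. by move=> lf; rewrite -scaleN1r lfZ // mulN1r. Qed.

Lemma lfB f x y : is_linear_functional f -> f (x - y) = f x - f y.
Proof. by move=> lf; rewrite lfD // lfN. Qed.

Variable N : X -> \bar R.
Hypothesis HN : is_ext_norm absK N.

Lemma N0 : N 0 = 0%E.
Proof. by case: HN => _ h _ _; apply/h. Qed.

Lemma NN x : N (- x) = N x.
Proof. by case: HN => _ _ h _; rewrite -scaleN1r h absKN1 mul1e. Qed.

Lemma NB x y : N (x - y) = N (y - x).
Proof. by rewrite -NN opprB. Qed.

Lemma NT x y : (N (x + y) <= N x + N y)%E.
Proof. by case: HN. Qed.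

Lemma NZ a x : N (a *: x) = ((absK a)%:E * N x)%E.
Proof. by case: HN. Qed.

Lemma Nge0 x : (0 <= N x)%E.
Proof. by case: HN. Qed.

Lemma NT3 x y z (r s : R) : (N (x - y) < r%:E)%E -> (N (y - z) < s%:E)%E ->
  (N (x - z) < (r + s)%:E)%E.
Proof.
move=> h1 h2; have -> : x - z = (x - y) + (y - z) by rewrite addrA subrK.
by apply: le_lt_trans (NT _ _) _; rewrite EFinD; apply: lteD.
Qed.

End LF.


Section Main.
Variables (X : lmodType K) (N : X -> \bar R) (P : set (X -> R)).
Hypotheses (HN : is_ext_banach absK N) (HP : is_finest_lc absK N P).
Let HNn : is_ext_norm absK N := HN.1.
Let O := lc_open P.

Lemma dual_cont0 f : dual absK O f ->
  exists2 d : R, 0 < d & forall y, (N y < d%:E)%E -> absK (f y) < 1.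
Proof.
case=> lf cf; have [U [OU U0 Usub]] := cf 0 1 ltr01.
case: HP => _ PN _; have [d d0 Hd] := PN U OU 0 U0.
exists d => // y Ny; have Uy : U y by apply: Hd; rewrite /= subr0.
by have := Usub y Uy; rewrite /= (lf0 lf) subr0.
Qed.

Lemma compact_ptbound (A : set (X -> K)) x :
  compact_in (@weak_star_open R K absK X) A ->
  exists M, forall f, A f -> absK (f x) <= M.
Proof.
move=> cA.
pose C := [set [set f : X -> K | absK (f x) < n%:R] | n in [set: nat]].
have CO : C `<=` @weak_star_open R K absK X.
  move=> _ [n _ <-] f /= fn; exists [set x]; split; first exact: finite_set1.
  exists (n%:R - absK (f x)); first by rewrite subr_gt0.
  move=> g /= /(_ x erefl) h.
  have := absK_lb (g x) (f x); lra.
have AC : A `<=` \bigcup_(V in C) V.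
  move=> f Af; have [n hn] := exists_nat_gt (absK (f x)).
  by exists [set f : X -> K | absK (f x) < n%:R] => //; exists n.
have [C' [finC' C'C AC']] := cA C CO AC.
have [M HM] : exists M : R, forall V, C' V -> forall f, V f -> absK (f x) <= M.
  apply: (finite_common_bound (Pr := fun (V : set (X -> K)) (M : R) =>
     forall f, V f -> absK (f x) <= M)) => //.
  - by move=> V d d' dd' h f Vf; apply: le_trans (h f Vf) dd'.
  - move=> V /C'C [n _ <-]; exists n%:R => f /= h; exact: ltW.
by exists M => f /AC' [V C'V Vf]; exact: HM C'V f Vf.
Qed.

Lemma BS (A : set (X -> K)) : mackey_sets absK O A ->
  exists2 d : R, 0 < d & exists M : R,
    forall y, (N y < d%:E)%E -> forall f, A f -> absK (f y) <= M.
Proof.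
case=> Adual _ cA.
apply: contrapT => nH.
have H : forall d : R, 0 < d -> forall M : R,
    exists y, (N y < d%:E)%E /\ exists2 f, A f & M < absK (f y).
  move=> d d0 M; apply: contrapT => nE; apply: nH; exists d => //; exists M.
  move=> y Ny f Af; rewrite leNgt; apply/negP => lt; apply: nE; exists y; split => //.
  by exists f.
have step : forall kxr : nat * (X * R), exists z : X * R * (X -> K),
   0 < kxr.2.2 ->
   [/\ (N (z.1.1 - kxr.2.1) < (kxr.2.2 / 2)%:E)%E, 0 < z.1.2,
       z.1.2 <= kxr.2.2 / 2, z.1.2 <= (kxr.1.+1%:R)^-1 &
       A z.2 /\ forall w, (N (w - z.1.1) < (2 * z.1.2)%:E)%E -> kxr.1%:R < absK (z.2 w)].
  case=> k [x r] /=.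
  have [r0|nr] := pselect (0 < r); last by exists (x, r, fun=> 0) => /= r0.
  have [Mx HMx] := compact_ptbound x cA.
  have [y' [Ny' [f Af hf]]] := H (r / 2) (divr_gt0 r0 ltr02) (k%:R + Mx + 1).
  have [df df0 Hdf] := dual_cont0 (Adual f Af).
  have lf : is_linear_functional f by case: (Adual f Af).
  pose s := Num.min (df / 2) (Num.min (r / 2) (k.+1%:R)^-1).
  exists (x + y', s, f) => _ /=.
  have kp : 0 < (k.+1%:R : R)^-1 by rewrite invr_gt0 ltr0n.
  have r2 : 0 < r / 2 by rewrite divr_gt0.
  have df2 : 0 < df / 2 by rewrite divr_gt0.
  have sdf : s <= df / 2 by rewrite /s ge_min lexx.
  split.
  - by rewrite addrAC subrr add0r.
  - by rewrite /s !lt_min df2 r2 kp.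
  - by rewrite /s !ge_min lexx !orbT.
  - by rewrite /s !ge_min lexx !orbT.
  split => // w Nw.
  have Nw' : (N (w - (x + y')) < df%:E)%E.
    by apply: lt_le_trans Nw _; rewrite lee_fin; lra.
  have h1 := Hdf _ Nw'.
  rewrite (lfB _ _ lf) (lfD _ _ lf) in h1.
  have h2 := HMx f Af.
  have e1 : absK (f y') <= absK (f x + f y') + absK (f x).
    by have := absKD (f x + f y') (- f x); rewrite absKN addrAC subrr add0r.
  have e2 : absK (f x + f y') <= absK (f w - (f x + f y')) + absK (f w).
    by have := absKD (f x + f y' - f w) (f w); rewrite subrK absKB.
  lra.
have [stepf Hstep] := choice step.
pose fix sq (n : nat) : X * R := if n is n'.+1 then (stepf (n', sq n')).1 else (0, 1).
have rpos : forall n, 0 < (sq n).2.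
  elim => [|n IH] /=; first exact: ltr01.
  by case: (Hstep (n, sq n) IH).
have F n : [/\ (N ((sq n.+1).1 - (sq n).1) < ((sq n).2 / 2)%:E)%E, 0 < (sq n.+1).2,
       (sq n.+1).2 <= (sq n).2 / 2, (sq n.+1).2 <= (n.+1%:R)^-1 &
       A (stepf (n, sq n)).2 /\ forall w, (N (w - (sq n.+1).1) < (2 * (sq n.+1).2)%:E)%E ->
         n%:R < absK ((stepf (n, sq n)).2 w)].
  exact: (Hstep (n, sq n) (rpos n)).
have D : forall d j : nat, (N ((sq (j + d)%N).1 - (sq j).1) < ((sq j).2)%:E)%E.
  elim => [|d IH] j.
    by rewrite addn0 subrr (N0 HNn) lte_fin rpos.
  rewrite -addSnnS.
  have [h1 _ h3 _ _] := F j.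
  apply: lt_le_trans (NT3 HNn (IH j.+1) h1) _; rewrite lee_fin; lra.
have cauchy : ext_cauchy N (fun n => (sq n).1).
  move=> eps eps0; have [k hk] := exists_nat_gt (2 / eps).
  exists k.+1 => m n km kn.
  have [_ _ _ h4 _] := F k.
  have hk' : 2 / eps < k.+1%:R by apply: lt_trans hk _; rewrite ltr_nat.
  have rk : (k.+1%:R : R)^-1 < eps / 2.
    rewrite -[eps / 2]invrK invf_div ltf_pV2 ?posrE ?ltr0n ?divr_gt0 //.
  have h1 := D (m - k.+1)%N k.+1.
  have h2 := D (n - k.+1)%N k.+1.
  rewrite (subnKC km) in h1; rewrite (subnKC kn) (NB HNn) in h2.
  apply: lt_le_trans (NT3 HNn h1 h2) _; rewrite lee_fin.
  move: h4 rk; set r := (sq k.+1).2; set i := (k.+1%:R)^-1 => h4 rk; lra.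
have [x xconv] := HN.2 _ cauchy.
have [Mx HMx] := compact_ptbound x cA.
have [k hk] := exists_nat_gt Mx.
have [_ _ _ _ [Afk Hfk]] := F k.
have : k%:R < absK ((stepf (k, sq k)).2 x).
  apply: Hfk.
  have [M0 HM0] := xconv _ (rpos k.+1).
  have hn := HM0 (maxn M0 k.+1) (leq_maxl _ _).
  have hd := D (maxn M0 k.+1 - k.+1)%N k.+1.
  rewrite subnKC ?leq_maxr // in hd.
  rewrite (NB HNn) in hn.
  apply: lt_le_trans (NT3 HNn hn hd) _; rewrite lee_fin; lra.
have := HMx _ Afk; lra.
Qed.

Definition QM := [set p | exists2 A, mackey_sets absK O A & p = unif_seminorm absK A].

Lemma unif_small A : mackey_sets absK O A -> forall eps : R, 0 < eps ->
  exists2 d : R, 0 < d & forall y, (N y < d%:E)%E -> unif_seminorm absK A y < eps.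
Proof.
move=> mA eps eps0; have [d d0 [M HM]] := BS mA.
case: mA => Adual _ _.
pose M' := `|M| + 1.
have M'0 : 0 < M' by rewrite /M'; have := normr_ge0 M; lra.
have MM' : M <= M' by rewrite /M'; have := ler_norm M; lra.
have a0 : 0 < eps / (2 * M') by rewrite divr_gt0 // mulr_gt0 // ltr02.
have [c hc] := absK_surj (ltW a0).
have c0 : c != 0 by apply/eqP => c0; move: a0; rewrite -hc c0 absK0 ltxx.
exists (d * (eps / (2 * M'))); first by rewrite mulr_gt0.
move=> y Ny.
apply: (@le_lt_trans _ _ (eps / 2)); last by lra.
apply: sup_le_of; first by lra.
move=> _ [f Af <-].
have lf : is_linear_functional f by case: (Adual f Af).
pose z := c^-1 *: y.
have yz : y = c *: z by rewrite /z scalerA mulfV // scale1r.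
have Nz : (N z < d%:E)%E.
  rewrite /z (NZ HNn) (absKV c0) hc.
  have N0y := Nge0 HNn y.
  have fin : N y \is a fin_num by rewrite ge0_fin_numE // (lt_trans Ny) ?ltry.
  move: Ny; rewrite -(fineK fin) -EFinM !lte_fin => Ny'.
  rewrite -(ltr_pM2l a0) mulrA mulfV ?mul1r; last by rewrite gt_eqF.
  by rewrite mulrC.
have hz := HM z Nz f Af.
have -> : f y = c * f z by rewrite {1}yz lfZ.
rewrite absKM hc.
apply: le_trans (ler_wpM2l (ltW a0) (le_trans hz MM')) _.
have -> : eps / (2 * M') * M' = eps / 2.
  by rewrite invfM mulrA -mulrA mulVf ?mulr1 // gt_eqF.
done.
Qed.

Lemma unif_bounded A x : mackey_sets absK O A -> has_ubound [set absK (f x) | f in A].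
Proof.
case=> _ _ cA; have [M HM] := compact_ptbound x cA.
by exists M => _ [f Af <-]; apply: HM.
Qed.

Lemma QM_semi : seminorm_family absK QM.
Proof.
move=> _ [A mA ->]; have [Adual _ _] := mA.
split.
- move=> x; apply: sup_ge0; first exact: unif_bounded.
  by move=> _ [f _ <-].
- move=> a x; rewrite /unif_seminorm.
  rewrite (eq_imagel (f' := fun f => absK a * absK (f x))); last first.
    by move=> f Af; rewrite lfZ ?absKM //; case: (Adual f Af).
  rewrite (sup_scale (g := fun f => absK (f x))) //.
  have [M HM] := unif_bounded x mA; exists M => f Af; apply: HM; by exists f.
- move=> x y; apply: sup_le_of.
  + by apply: addr_ge0; (apply: sup_ge0; [exact: unif_bounded| by move=> _ [f _ <-]]).
  + move=> _ [f Af <-]; have lf : is_linear_functional f by case: (Adual f Af).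
    rewrite lfD //; apply: le_trans (absKD _ _) _.
    by apply: lerD; apply: ub_le_sup; (try exact: unif_bounded); exists f.
Qed.

Lemma QM_sub : lc_open QM `<=` ext_norm_open N.
Proof.
move=> U HU x Ux; have [F [finF FQ [eps eps0 Hb]]] := HU x Ux.
have [d d0 Hd] : exists2 d : R, 0 < d &
    forall q, F q -> forall y, (N y < d%:E)%E -> q y < eps.
  apply: (finite_common_radius (Pr := fun (q : X -> R) (d : R) =>
     forall y, (N y < d%:E)%E -> q y < eps)) => //.
  - move=> q d1 d2 _ d21 h y Ny; apply: h; apply: lt_le_trans Ny _; by rewrite lee_fin.
  - move=> q /FQ [A mA ->]; exact: unif_small.
exists d => // y /= Ny; apply: Hb => q Fq; exact: Hd.
Qed.

Definition Apol (p : X -> R) :=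
  [set f : X -> K | is_linear_functional f /\ forall x, absK (f x) <= p x].

Hypothesis HBX : forall p, is_seminorm absK p -> forall x0,
  exists2 f, Apol p f & p x0 <= absK (f x0).
Hypothesis ALX : forall p, is_seminorm absK p ->
  compact_in (@weak_star_open R K absK X) (Apol p).

Lemma Apol_mackey p : P p -> mackey_sets absK O (Apol p).
Proof.
move=> Pp; have ps : is_seminorm absK p by case: HP => sf _ _; exact: sf.
case: (ps) => pge0 pZ pD.
have p0 : p 0 = 0 by have := pZ 0 0; rewrite scale0r absK0 mul0r.
split.
- move=> f [lf fp]; split => // x eps eps0.
  exists [set y | p (y - x) < eps]; split.
  + move=> y /= hy; exists [set p]; split; [exact: finite_set1| by move=> q ->|].
    exists (eps - p (y - x)); first by rewrite subr_gt0.
    move=> z /= /(_ p erefl) hz.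
    have := pD (z - y) (y - x); rewrite addrA subrK; lra.
  + by rewrite /= subrr p0.
  + move=> y /= hy; rewrite -lfB //; apply: le_lt_trans (fp _) hy.
- move=> f g a b [lf fp] [lg gp] hab; split.
  + by move=> c x y; rewrite lf lg; ring.
  + move=> x; apply: le_trans (absKD _ _) _; rewrite !absKM.
    have h1 := ler_wpM2l (absK_ge0 a) (fp x).
    have h2 := ler_wpM2l (absK_ge0 b) (gp x).
    have h3 : (absK a + absK b) * p x <= p x.
      by rewrite -subr_ge0 -[Y in Y - _]mul1r -mulrBl mulr_ge0 // subr_ge0.
    rewrite mulrDl in h3; lra.
- exact: ALX.
Qed.

Lemma unif_Apol_ge p y : P p -> p y <= unif_seminorm absK (Apol p) y.
Proof.
move=> Pp; have ps : is_seminorm absK p by case: HP => sf _ _; exact: sf.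
have [f Af hf] := HBX ps y; apply: le_trans hf _; apply: ub_le_sup.
  by exists (p y) => _ [g [_ gp] <-]; exact: gp.
by exists f.
Qed.

Lemma dir2 : lc_open P `<=` lc_open QM.
Proof.
move=> U HU x Ux; have [F [finF FP [eps eps0 Hb]]] := HU x Ux.
exists ((fun p => unif_seminorm absK (Apol p)) @` F); split.
- exact: finite_image.
- move=> _ [p Fp <-]; exists (Apol p) => //; exact: Apol_mackey (FP p Fp).
- exists eps => // y hy; apply: Hb => p Fp.
  apply: le_lt_trans (unif_Apol_ge _ (FP p Fp)) (hy _ _); by exists p.
Qed.

Theorem generic_main : lc_open P = mackey_open absK (lc_open P).
Proof.
apply/seteqP; split; first exact: dir2.
case: HP => _ _ Hmax; exact: Hmax _ QM_semi QM_sub.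
Qed.

End Main.

End Generic.

Section HahnBanach.
Variables (R : realType) (V : lmodType R) (p : V -> R) (x0 : V).
Hypothesis ps : is_seminorm (fun a : R => `|a|) p.

Let pge0 x : 0 <= p x. Proof. by case: ps. Qed.
Let pZ a x : p (a *: x) = `|a| * p x. Proof. by case: ps. Qed.
Let pD x y : p (x + y) <= p x + p y. Proof. by case: ps. Qed.
Let p0 : p 0 = 0. Proof. by have := pZ 0 0; rewrite scale0r normr0 mul0r. Qed.

Definition hb_adm (G : set (V * R)) :=
  [/\ forall x a b, G (x, a) -> G (x, b) -> a = b,
      forall x y a b t, G (x, a) -> G (y, b) -> G (t *: x + y, t * a + b),
      forall x a, G (x, a) -> a <= p x &
      forall x a, G (x, a) -> G (x0, p x0)].

Lemma hb_chain (F : set (set (V * R))) : F `<=` hb_adm -> total_on F subset ->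
  hb_adm (\bigcup_(G in F) G).
Proof.
move=> Fadm tot; split.
- move=> x a b [G1 F1 h1] [G2 F2 h2].
  have [s12|s21] := tot _ _ F1 F2.
  + by case: (Fadm _ F2) => fu _ _ _; apply: fu (s12 _ h1) h2.
  + by case: (Fadm _ F1) => fu _ _ _; apply: fu h1 (s21 _ h2).
- move=> x y a b t [G1 F1 h1] [G2 F2 h2].
  have [s12|s21] := tot _ _ F1 F2.
  + by exists G2 => //; case: (Fadm _ F2) => _ li _ _; apply: li (s12 _ h1) h2.
  + by exists G1 => //; case: (Fadm _ F1) => _ li _ _; apply: li h1 (s21 _ h2).
- by move=> x a [G FG h]; case: (Fadm _ FG) => _ _ d _; apply: d h.
- by move=> x a [G FG h]; exists G => //; case: (Fadm _ FG) => _ _ _ b; apply: b h.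
Qed.

Definition hb_G0 := [set z : V * R | exists t : R, z = (t *: x0, t * p x0)].

Lemma hb_G0_adm : hb_adm hb_G0.
Proof.
split.
- move=> x a b [t [-> ->]] [s [e ->]].
  have [->//|ts] := eqVneq t s.
  have : (t - s) *: x0 == 0 by rewrite scalerBl e subrr.
  rewrite scaler_eq0 subr_eq0 (negbTE ts) /= => /eqP x00.
  by rewrite x00 p0 !mulr0.
- move=> x y a b u [t [-> ->]] [s [-> ->]].
  by exists (u * t + s); rewrite scalerDl scalerA; congr pair; ring.
- move=> x a [t [-> ->]]; rewrite pZ; apply: ler_wpM2r => //; exact: ler_norm.
- by move=> x a _; exists 1; rewrite scale1r mul1r.
Qed.

Lemma hahn_banach : exists2 f : V -> R,
  is_linear_functional f /\ (forall x, `|f x| <= p x) & f x0 = p x0.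
Proof.
have [A [admA maxA]] := Zorn_bigcup hb_chain.
case: (admA) => Afu Ali Ado Aba.
have Ax0 : A (x0, p x0).
  apply: contrapT => nA.
  have [[z Az]|nz] := pselect (exists z, A z).
    by case: z Az => x a /Aba.
  apply: (maxA hb_G0) hb_G0_adm; split.
    by move=> z Az; exfalso; apply: nz; exists z.
  move=> h; apply: nA; apply: h; exists 1; by rewrite scale1r mul1r.
have A00 : A (0, 0).
  by have := Ali _ _ _ _ (-1) Ax0 Ax0; rewrite scaleN1r addNr mulN1r addNr.
have tot : forall x, exists a, A (x, a).
  move=> x1; apply: contrapT => nx1.
  have nA : forall a, ~ A (x1, a) by move=> a h; apply: nx1; exists a.
  pose S := [set z.2 - p (z.1 - x1) | z in A].
  have key : forall y a z b, A (y, a) -> A (z, b) -> a - p (y - x1) <= p (z + x1) - b.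
    move=> y a z b Aya Azb; have := Ado _ _ (Ali _ _ _ _ 1 Aya Azb).
    rewrite scale1r mul1r => h.
    have := pD (y - x1) (z + x1).
    have -> : y - x1 + (z + x1) = y + z by rewrite addrCA subrK addrC.
    move=> h2; lra.
  have ubS : has_ubound S.
    by exists (p (0 + x1) - 0) => _ [[y a] Aya <-]; exact: key A00.
  pose c := sup S.
  have cge : forall y a, A (y, a) -> a - p (y - x1) <= c.
    by move=> y a Aya; apply: ub_le_sup => //; exists (y, a).
  have cle : forall z b, A (z, b) -> c <= p (z + x1) - b.
    move=> z b Azb; apply: ge_sup; first by exists (0 - p (0 - x1)), (0, 0).
    by move=> _ [[y a] Aya <-]; exact: key Azb.
  pose A' := [set w : V * R | exists y a t, A (y, a) /\ w = (y + t *: x1, a + t * c)].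
  have AA' : A `<=` A'.
    by move=> [y a] Aya; exists y, a, 0; rewrite scale0r mul0r !addr0.
  apply: (maxA A'); first split => //.
    move=> h; apply: (nA c); apply: h; exists 0, 0, 1.
    by rewrite scale1r mul1r !add0r.
  split.
  - move=> x a b [y [a1 [t [Aya1 [-> ->]]]]] [y' [a2 [t' [Aya2 [e ->]]]]].
    have [tt|tt] := eqVneq t t'.
      rewrite -tt in e *; have yy : y = y' by apply: (addIr (t *: x1)).
      by rewrite -yy in Aya2; rewrite (Afu _ _ _ Aya1 Aya2).
    exfalso.
    have d0 : t - t' != 0 by rewrite subr_eq0.
    have e2 : (t - t') *: x1 = y' - y.
      rewrite scalerBl; apply: (addrI y); rewrite addrA e addrK.
      by rewrite [y + _]addrC subrK.
    have Ad := Ali _ _ _ _ (-1) Aya1 Aya2; rewrite scaleN1r mulN1r in Ad.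
    have Ad2 := Ali _ _ _ _ ((t - t')^-1) Ad A00; rewrite !addr0 in Ad2.
    apply: (nA ((t - t')^-1 * (- a1 + a2))).
    have -> : x1 = (t - t')^-1 *: (- y + y').
      by rewrite [- y + y']addrC -e2 scalerA mulVf // scale1r.
    exact: Ad2.
  - move=> x y a b s [y1 [a1 [t1 [A1 [-> ->]]]]] [y2 [a2 [t2 [A2 [-> ->]]]]].
    exists (s *: y1 + y2), (s * a1 + a2), (s * t1 + t2); split.
      exact: Ali.
    congr pair; last by ring.
    by rewrite scalerDr scalerA scalerDl addrACA.
  - move=> x a [y [a1 [t [Aya [-> ->]]]]].
    have [t0|tneg] := ltP 0 t.
      have Ay' := Ali _ _ _ _ (t^-1) Aya A00; rewrite !addr0 in Ay'.
      have h := cle _ _ Ay'.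
      have h2 := ler_wpM2l (ltW t0) h.
      rewrite mulrBr mulrA mulfV ?gt_eqF // mul1r in h2.
      have e3 : t * p (t^-1 *: y + x1) = p (y + t *: x1).
        have -> : y + t *: x1 = t *: (t^-1 *: y + x1).
          by rewrite scalerDr scalerA mulfV ?gt_eqF // scale1r.
        by rewrite pZ gtr0_norm.
      rewrite e3 in h2; lra.
    have [t00|tn] := eqVneq t 0.
      by rewrite t00 scale0r mul0r !addr0; exact: Ado Aya.
    have sp : 0 < - t by rewrite oppr_gt0 lt_neqAle tn tneg.
    have Ay' := Ali _ _ _ _ ((- t)^-1) Aya A00; rewrite !addr0 in Ay'.
    have h := cge _ _ Ay'.
    have h2 := ler_wpM2l (ltW sp) h.
    rewrite mulrBr mulrA mulfV ?gt_eqF // mul1r in h2.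
    have e3 : - t * p ((- t)^-1 *: y - x1) = p (y + t *: x1).
      have -> : y + t *: x1 = (- t) *: ((- t)^-1 *: y - x1).
        by rewrite scalerDr scalerA mulfV ?gt_eqF // scale1r scalerN scaleNr opprK.
      by rewrite pZ gtr0_norm.
    rewrite e3 in h2.
    have -> : a1 + t * c = a1 - (- t) * c by rewrite mulNr opprK.
    lra.
  - by move=> x a _; exists x0, (p x0), 0; rewrite scale0r mul0r !addr0.
have [f Hf] := choice tot.
exists f; last exact: Afu (Hf x0) Ax0.
have lf : is_linear_functional f.
  by move=> t x y; apply: Afu (Hf _) (Ali _ _ _ _ t (Hf x) (Hf y)).
split => // x; rewrite ler_norml; apply/andP; split; last exact: Ado (Hf x).
have := Ado _ _ (Hf (- x)); rewrite lfN // => h.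
have : p (- x) = p x by rewrite -scaleN1r pZ normrN1 mul1r.
lra.
Qed.

End HahnBanach.

HB.instance Definition _ (R : realType) (W : Type) :=
  Pointed.copy (prod_topology (fun _ : W => R)) (W -> R).

Section Topo.
Variable R : realType.

Lemma basic_nbhs (W : eqType) (g : prod_topology (fun _ : W => R)) (s : seq W) (d : R) :
  0 < d -> nbhs g [set h : prod_topology (fun _ : W => R) | forall w, w \in s -> `|h w - g w| < d].
Proof.
move=> d0; elim: s => [|a s IH].
  apply: (@filterS _ _ _ setT); last exact: filterT.
  by move=> h _ w; rewrite in_nil.
have hb : nbhs (g a) (ball (g a) d) := nbhsx_ballx (g a) d d0.
have hp := @proj_continuous W (fun _ => R) a g _ hb.
move: hp; rewrite {1}/fmap => hp.
have ha : nbhs g [set h : prod_topology (fun _ : W => R) | `|h a - g a| < d].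
  apply: (@filterS _ _ _ [set h : prod_topology (fun _ : W => R) | ball (g a) d (h a)] _ _ hp) => h hh.
  have hh' : ball (g a) d (h a) := hh.
  move: hh'; rewrite -ball_normE.
  by rewrite /ball_ /= distrC.
apply: filterS (filterI ha IH) => h [h1 h2] w; rewrite inE => /orP[/eqP->//|]; exact: h2.
Qed.

Lemma compact_transfer (K : pzRingType) (absK : K -> R) (X : lmodType K) (W : eqType)
  (B : set (prod_topology (fun _ : W => R))) (Phi : (W -> R) -> (X -> K)) :
  compact B ->
  (forall g (F : set X) (eps : R), finite_set F -> 0 < eps ->
     exists s : seq W, exists2 d : R, 0 < d &
       forall h, (forall w, w \in s -> `|h w - g w| < d) ->
         forall x, F x -> absK (Phi h x - Phi g x) < eps) ->
  compact_in (@weak_star_open R K absK X) (Phi @` B).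
Proof.
move=> cB Hc C CO cov.
have cB' : cover_compact B by rewrite -compact_cover.
have := cB' _ C (fun V => Phi @^-1` V).
case.
- move=> V CV; rewrite openE => g /= Vg.
  have [F [finF [eps eps0 Hb]]] := CO V CV _ Vg.
  have [s [d d0 Hd]] := Hc g F eps finF eps0.
  apply: filterS (basic_nbhs g s d0) => h /= hs.
  by apply: Hb => x Fx; apply: Hd.
- by move=> g Bg; have [V CV Vg] := cov _ (ex_intro2 _ _ g Bg erefl); exists V.
move=> D' D'C BD'.
exists [set` D']; split.
- exact: finite_fset.
- by move=> V /= VD'; have := D'C V VD'; rewrite in_setE.
- by move=> _ [g Bg <-]; have [V VD' Vg] := BD' g Bg; exists V.
Qed.

End Topo.

Section AlaogluR.
Variables (R : realType) (V : lmodType R).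
Let PT := prod_topology (fun _ : V => R).
Lemma c1 z : continuous (fun g : PT => g z).
Proof. move=> g; exact: (@proj_continuous V (fun _ => R) z g). Qed.
Lemma cont_lin (t : R) (x y : V) : continuous (fun g : PT => g (t *: x + y) - t * g x - g y).
Proof.
move=> g.
have h1 := @c1 (t *: x + y) g.
have h2 := @c1 x g.
have h3 := @c1 y g.
have hc : {for g, continuous (fun _ : PT => t)} := (@cst_continuous PT R t g).
have h4 := continuousM hc h2.
have h5 := continuousB (continuousB h1 h4) h3.
exact: h5.
Qed.

Lemma closed_lin : closed [set g : PT | forall t x y, g (t *: x + y) = t * g x + g y].
Proof.
have -> : [set g : PT | forall t x y, g (t *: x + y) = t * g x + g y] =
  \bigcap_(i in [set: R * V * V]) ((fun g : PT => g (i.1.1 *: i.1.2 + i.2) - i.1.1 * g i.1.2 - g i.2) @^-1` [set 0]).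
  apply/seteqP; split => g /=.
    by move=> h [[t x] y] _ /=; rewrite h; ring.
  move=> h t x y; have := h (t, x, y) I; rewrite /= => /eqP; rewrite subr_eq0 subr_eq => /eqP e.
  by rewrite e addrC.
apply: closed_bigI => i _; apply: preimage_closed; last exact: closed_eq.
by move=> g _; exact: cont_lin.
Qed.

Variable p : V -> R.
Hypothesis ps : is_seminorm (fun a : R => `|a|) p.

Lemma alaoglu_mc : compact [set g : PT | is_linear_functional g /\ forall x, `|g x| <= p x].
Proof.
have -> : [set g : PT | is_linear_functional g /\ forall x, `|g x| <= p x]
  = [set g : PT | forall x, `[- p x, p x] (g x)] `&`
    [set g : PT | forall t x y, g (t *: x + y) = t * g x + g y].
  apply/seteqP; split => g /=.
    move=> [lg gp]; split => // x; rewrite /= in_itv /= -ler_norml; exact: gp.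
  by move=> [gp lg]; split => // x; rewrite ler_norml; have := gp x; rewrite /= in_itv.
apply: compact_closedI; last exact: closed_lin.
exact: (@tychonoff V (fun _ => R) (fun x => `[- p x, p x]) (fun x => @segment_compact R (- p x) (p x))).
Qed.

Lemma alaoglu_R : compact_in (@weak_star_open R R (fun a : R => `|a|) V)
  [set f : V -> R | is_linear_functional f /\ forall x, `|f x| <= p x].
Proof.
have := compact_transfer (absK := fun a : R => `|a|) (X := V) (Phi := id) alaoglu_mc.
rewrite image_id; apply.
move=> g F eps finF eps0; exists (fset_set F : seq V), eps => // h hs x Fx.
apply: hs; have := in_fset_set finF x; rewrite /= => ->; by rewrite in_setE.
Qed.

End AlaogluR.

Section Realify.
Variables (R : realType) (X : lmodType R[i]).
Definition realify : Type := X.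
HB.instance Definition _ := GRing.Zmodule.copy realify X.
Definition rscale (r : R) (x : realify) : realify := ((r%:C)%C *: (x : X)).
Lemma rscaleA a b v : rscale a (rscale b v) = rscale (a * b) v.
Proof. by rewrite /rscale scalerA -rmorphM. Qed.
Lemma rscale1 : left_id 1 rscale.
Proof. by move=> v; rewrite /rscale rmorph1 scale1r. Qed.
Lemma rscaleDr : right_distributive rscale +%R.
Proof. by move=> a u v; rewrite /rscale scalerDr. Qed.
Lemma rscaleDl v : {morph rscale^~ v: a b / a + b}.
Proof. by move=> a b; rewrite /rscale rmorphD scalerDl. Qed.
HB.instance Definition _ :=
  GRing.Zmodule_isLmodule.Build R realify rscaleA rscale1 rscaleDr rscaleDl.
End Realify.

Section ComplexPart.
Variables (R : realType) (X : lmodType R[i]).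
Local Notation W := (realify X).
Local Open Scope complex_scope.

Lemma normC_E (a b : R) : normC (a +i* b) = Num.sqrt (a ^+ 2 + b ^+ 2).
Proof. by []. Qed.

Lemma normC_ge0 (z : R[i]) : 0 <= normC z.
Proof. by case: z => a b; rewrite normC_E sqrtr_ge0. Qed.

Lemma normC_real (a : R) : normC (a%:C) = `|a|.
Proof. by rewrite /normC /= expr0n /= addr0 sqrtr_sqr. Qed.

Lemma normC_ge_abs (a b : R) : `|a| <= normC (a +i* b).
Proof.
rewrite normC_E -sqrtr_sqr; apply: ler_wsqrtr; rewrite lerDl; exact: sqr_ge0.
Qed.

Lemma normC_ge_Re (a b : R) : a <= normC (a +i* b).
Proof.
rewrite normC_E; apply: le_trans (ler_norm a) _.
rewrite -sqrtr_sqr; apply: ler_wsqrtr; rewrite lerDl; exact: sqr_ge0.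
Qed.

Lemma normC_le (a b : R) : normC (a +i* b) <= `|a| + `|b|.
Proof.
rewrite normC_E -[Y in _ <= Y]ger0_norm ?addr_ge0 // -sqrtr_sqr.
apply: ler_wsqrtr.
have ha := real_normK (num_real a); have hb := real_normK (num_real b).
have := normr_ge0 a; have := normr_ge0 b; nra.
Qed.

Definition cphi (g : W -> R) : X -> R[i] :=
  fun x => (g x)%:C - 'i * (g ('i *: x))%:C.

Lemma cphiE (g : W -> R) (x : X) : cphi g x = g x +i* (- g ('i *: x)).
Proof. by rewrite /cphi; apply/eqP; rewrite eq_complex /= !mulr0 !mul0r; apply/andP; split; apply/eqP; ring. Qed.

Section Lin.
Variable g : W -> R.
Hypothesis lg : is_linear_functional g.

Let gD (v w : X) : g (v + w) = g v + g w.
Proof. exact: (lfD _ _ lg). Qed.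
Let gZ (r : R) (v : X) : g ((r%:C) *: v) = r * g v.
Proof. exact: (lfZ _ _ lg). Qed.

Lemma cdecomp (a : R[i]) (x : X) : a *: x = ((complex.Re a)%:C) *: x + ((complex.Im a)%:C) *: ('i *: x).
Proof.
rewrite scalerA -scalerDl; congr (_ *: _).
case: a => u v; apply/eqP; rewrite eq_complex /=; apply/andP; split; apply/eqP; ring.
Qed.

Lemma gsplit (a : R[i]) (x : X) : g (a *: x) = complex.Re a * g x + complex.Im a * g ('i *: x).
Proof. by rewrite cdecomp gD gZ gZ. Qed.

Lemma cphiZ (a : R[i]) (x : X) : cphi g (a *: x) = a * cphi g x.
Proof.
rewrite !cphiE scalerA (gsplit a x) (gsplit ('i * a) x); case: a => u v /=.
apply/eqP; rewrite eq_complex /=; apply/andP; split; apply/eqP; ring.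
Qed.

Lemma cphiD (x y : X) : cphi g (x + y) = cphi g x + cphi g y.
Proof.
rewrite !cphiE scalerDr !gD.
apply/eqP; rewrite eq_complex /=; apply/andP; split; apply/eqP; ring.
Qed.

Lemma cphi_lin : is_linear_functional (cphi g).
Proof. by move=> a x y; rewrite cphiD cphiZ. Qed.

Lemma cphi_Re (x : X) : complex.Re (cphi g x) = g x.
Proof. by rewrite cphiE. Qed.

Variable p : X -> R.
Hypothesis ps : is_seminorm (@normC R) p.
Hypothesis gp : forall x : W, `|g x| <= p x.

Lemma cphi_bound (x : X) : normC (cphi g x) <= p x.
Proof.
case: (ps) => pge0 pZ _.
have := cphiE g x; set a := g x; set b := - g ('i *: x) => e.
have h := cphiZ (a +i* (- b)) x.
rewrite e in h.
have h2 : g ((a +i* (- b)) *: x) = a ^+ 2 + b ^+ 2.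
  rewrite -cphi_Re h /=; ring.
have h3 := gp ((a +i* (- b)) *: x : X).
rewrite h2 (pZ (a +i* (- b)) x) normC_E in h3.
rewrite e normC_E.
have n0 : 0 <= a ^+ 2 + b ^+ 2 by rewrite addr_ge0 // sqr_ge0.
have h4 : Num.sqrt (a ^+ 2 + (- b) ^+ 2) = Num.sqrt (a ^+ 2 + b ^+ 2) by rewrite sqrrN.
rewrite h4 in h3.
have sq := sqr_sqrtr n0.
have s0 := sqrtr_ge0 (a ^+ 2 + b ^+ 2).
have px0 := pge0 x.
move: h3 sq s0; set n := Num.sqrt _; move=> h3 sq s0.
rewrite ger0_norm ?n0 // in h3.
nra.
Qed.

End Lin.

Lemma semi_realify (p : X -> R) : is_seminorm (@normC R) p ->
  is_seminorm (fun a : R => `|a|) (p : W -> R).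
Proof.
case=> pge0 pZ pD; split => //.
by move=> a x; rewrite -normC_real; exact: (pZ (a%:C) x).
Qed.

Lemma hb_C (p : X -> R) : is_seminorm (@normC R) p -> forall x0 : X,
  exists2 f : X -> R[i], (is_linear_functional f /\ forall x, normC (f x) <= p x)
    & p x0 <= normC (f x0).
Proof.
move=> ps x0.
have [g [lg gp] gx0] := hahn_banach (x0 : W) (semi_realify ps).
exists (cphi g); first by split; [exact: cphi_lin | exact: cphi_bound].
rewrite cphiE; apply: le_trans (normC_ge_Re _ _); by rewrite gx0.
Qed.

Lemma al_C (p : X -> R) : is_seminorm (@normC R) p ->
  compact_in (@weak_star_open R R[i] (@normC R) X)
    [set f : X -> R[i] | is_linear_functional f /\ forall x, normC (f x) <= p x].
Proof.
move=> ps; have ps' := semi_realify ps.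
have cB := @alaoglu_mc R W p.
have := compact_transfer (absK := @normC R) (X := X) (Phi := cphi) cB.
have -> : cphi @` [set g : prod_topology (fun _ : W => R) |
    is_linear_functional g /\ forall x, `|g x| <= p x] =
  [set f : X -> R[i] | is_linear_functional f /\ forall x, normC (f x) <= p x].
  apply/seteqP; split.
    move=> _ [g [lg gp] <-]; split; [exact: cphi_lin | exact: cphi_bound].
  move=> f [lf fb]; exists (fun x : W => complex.Re (f x)).
    split.
      move=> r v w /=; rewrite (lf (r%:C) v w).
      by case: (f v) => u1 u2; case: (f w) => w1 w2 /=; ring.
    move=> x; apply: le_trans (fb x); case: (f x) => u v; exact: normC_ge_abs.
  apply: funext => x; rewrite cphiE (lfZ _ _ lf) /=.
  by case: (f x) => u v /=; apply/eqP; rewrite eq_complex /=; apply/andP; split; apply/eqP; ring.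
apply.
move=> g F eps finF eps0.
exists ([seq (x : W) | x <- (fset_set F : seq X)] ++ [seq ('i *: x : W) | x <- (fset_set F : seq X)]).
exists (eps / 2); first by rewrite divr_gt0 // ltr0n.
move=> h hs x Fx.
have xs : x \in (fset_set F : seq X) by have := in_fset_set finF x; rewrite /= => ->; rewrite in_setE.
have h1 := hs (x : W); rewrite mem_cat map_id xs /= in h1.
have h2 := hs ('i *: x : W); rewrite mem_cat (map_f (fun x : X => ('i *: x : W)) xs) orbT in h2.
have := h1 isT; have := h2 isT => {h1 h2} h2 h1.
rewrite !cphiE.
have -> : (h x +i* - h ('i *: x)) - (g x +i* - g ('i *: x)) =
  (h x - g x) +i* (- (h ('i *: x) - g ('i *: x))).
  by apply/eqP; rewrite eq_complex /=; apply/andP; split; apply/eqP; ring.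
apply: le_lt_trans (normC_le _ _) _; rewrite normrN; lra.
Qed.

End ComplexPart.

Lemma real_case (R : realType) (X : lmodType R) (N : X -> \bar R) (P : set (X -> R)) :
  is_ext_banach (fun a : R => `|a|) N -> is_finest_lc (fun a : R => `|a|) N P ->
  lc_open P = mackey_open (fun a : R => `|a|) (lc_open P).
Proof.
move=> HN HP.
have h6 : forall r : R, 0 <= r -> exists c : R, `|c| = r.
  by move=> r hr; exists r; rewrite ger0_norm.
have h1 : forall a : R, 0 <= `|a| by move=> a; exact: normr_ge0.
have h2 : `|0 : R| = 0 by rewrite normr0.
have h3 : `|1 : R| = 1 by rewrite normr1.
have h4 : forall a b : R, `|a * b| = `|a| * `|b| by move=> a b; rewrite normrM.
have h5 : forall a b : R, `|a + b| <= `|a| + `|b| by move=> a b; exact: ler_normD.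
have HG := (@generic_main R R (fun a : R => `|a|) h1 h2 h3 h4 h5 h6 X N P HN HP).
apply: HG.
- move=> p ps x0; have [f [lf fp] fx] := hahn_banach x0 ps.
  by exists f; [split | rewrite fx; exact: ler_norm].
- by move=> p ps; exact: alaoglu_R.
Qed.

Lemma complex_case (R : realType) (X : lmodType R[i]) (N : X -> \bar R) (P : set (X -> R)) :
  is_ext_banach (@normC R) N -> is_finest_lc (@normC R) N P ->
  lc_open P = mackey_open (@normC R) (lc_open P).
Proof.
move=> HN HP.
have h6 : forall r : R, 0 <= r -> exists c : R[i], normC c = r.
  by move=> r hr; exists (r%:C)%C; rewrite normC_real ger0_norm.
apply: (@generic_main R R[i] (@normC R) (@normC_ge0 R) (@ComplexField.Normc.normc0 R)
   (@ComplexField.Normc.normc1 R) (@ComplexField.Normc.normcM R) (@le_normcD R) h6 X N P HN HP).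
- exact: hb_C.
- exact: al_C.
Qed.

Local Close Scope classical_set_scope.
Unset Implicit Arguments.

Theorem corollary5p19 (R : realType) :
  (forall (X : lmodType R) (N : X -> \bar R) (P : set (X -> R)),
     is_ext_banach (fun a : R => `|a|) N -> is_finest_lc (fun a : R => `|a|) N P ->
     lc_open P = mackey_open (fun a : R => `|a|) (lc_open P)) /\
  (forall (X : lmodType (complex.complex R)) (N : X -> \bar R)
          (P : set (X -> R)),
     is_ext_banach (@normC R) N -> is_finest_lc (@normC R) N P ->
     lc_open P = mackey_open (@normC R) (lc_open P)).
Proof.
split; [exact: real_case | exact: complex_case].
Qed.
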